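(* Let $K$ be a field, $m\ge2$, $d_1,\ldots,d_m$ positive integers, and let $I_2(D)\subset S=K[x_1,\ldots,x_m,y_1,\ldots,y_m]$ be the ideal generated by the $2$-minors of the matrix $D=\begin{pmatrix}x_1^{d_1}&\cdots&x_m^{d_m}\\ y_1^{d_1}&\cdots&y_m^{d_m}\end{pmatrix}$. Then $\mathrm{bar}(I_2(D))=\frac{m(m-1)}{2}$.
   Context: $\mathrm{bar}(I)$ denotes the binomial arithmetical rank: the least integer $s$ such that there exist binomials $B_1,\ldots,B_s\in I$ with $\mathrm{rad}(I)=\mathrm{rad}(B_1,\ldots,B_s)$. *)

(* Defs.v *)
From mathcomp Require Import all_boot all_algebra.
From mathcomp Require Import mpoly.
Set Implicit Arguments. Unset Strict Implicit. Unset Printing Implicit Defensive.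
Import GRing.Theory.
Local Open Scope ring_scope.

Definition in_ideal (K : fieldType) (n : nat) (gs : seq {mpoly K[n]})
  (f : {mpoly K[n]}) : Prop :=
  exists c : 'I_(size gs) -> {mpoly K[n]},
    f = \sum_(i < size gs) c i * gs`_i.

Definition in_rad_ideal (K : fieldType) (n : nat) (gs : seq {mpoly K[n]})
  (f : {mpoly K[n]}) : Prop :=
  exists k : nat, in_ideal gs (f ^+ k).

Definition same_radical (K : fieldType) (n : nat) (gs hs : seq {mpoly K[n]}) : Prop :=
  forall f, in_rad_ideal gs f <-> in_rad_ideal hs f.

Definition binomial (K : fieldType) (n : nat) (p : {mpoly K[n]}) : Prop :=
  (size (msupp p) <= 2)%N.

Definition bar_eq (K : fieldType) (n : nat) (gs : seq {mpoly K[n]}) (s : nat) : Prop :=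
  (exists B : seq {mpoly K[n]},
      size B = s /\ (forall b, b \in B -> binomial b /\ in_ideal gs b)
      /\ same_radical gs B)
  /\ (forall B : seq {mpoly K[n]},
      (forall b, b \in B -> binomial b /\ in_ideal gs b) ->
      same_radical gs B -> (s <= size B)%N).

Definition xv (K : fieldType) (m : nat) (i : 'I_m) : {mpoly K[m + m]} :=
  'X_(lshift m i).
Definition yv (K : fieldType) (m : nat) (i : 'I_m) : {mpoly K[m + m]} :=
  'X_(rshift m i).

Definition minorD (K : fieldType) (m : nat) (d : 'I_m -> nat) (i j : 'I_m)
  : {mpoly K[m + m]} :=
  xv K i ^+ d i * yv K j ^+ d j - xv K j ^+ d j * yv K i ^+ d i.

Definition I2D_pairs (m : nat) : seq ('I_m * 'I_m) :=
  [seq ij <- [seq (i, j) | i <- enum 'I_m, j <- enum 'I_m] | (val ij.1 < val ij.2)%N].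

Definition I2D (K : fieldType) (m : nat) (d : 'I_m -> nat) : seq {mpoly K[m + m]} :=
  [seq minorD K d ij.1 ij.2 | ij <- I2D_pairs m].

(* Main.v *)
Require Import Defs.
From mathcomp Require Import all_boot all_algebra.
From mathcomp Require Import mpoly.
From mathcomp Require Import zify.
Set Implicit Arguments. Unset Strict Implicit. Unset Printing Implicit Defensive.
Import GRing.Theory.
Local Open Scope ring_scope.

Lemma count_iota_gt a m : (a < m)%N -> count (fun k => a < k)%N (iota 0 m) = (m - a.+1)%N.
Proof.
move=> am; rewrite -{1}(subnKC am) iotaD count_cat add0n.
rewrite (@eq_in_count _ _ pred0) ?count_pred0; last first.
  by move=> k; rewrite mem_iota add0n => /andP[_]; rewrite ltnNge => /negbTE ->.
rewrite add0n (@eq_in_count _ _ predT) ?count_predT ?size_iota //.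
by move=> k; rewrite mem_iota => /andP[].
Qed.

Lemma size_pairs m : size (I2D_pairs m) = 'C(m, 2).
Proof.
rewrite size_filter count_flatten -map_comp sumnE big_map big_enum /=.
rewrite (reindex_inj rev_ord_inj) /= -bin2_sum big_mkord.
apply: eq_bigr => i _; rewrite count_map.
rewrite -[count _ _]/(count (preim val (fun k => (m - i.+1 < k)%N)) (enum 'I_m)).
rewrite -count_map val_enum_ord count_iota_gt; last by case: i => /= i; lia.
case: i => /= i; lia.
Qed.

Section Gen.
Variables (K : fieldType) (n : nat).
Implicit Types (S : pred 'I_n) (p : {mpoly K[n]}).

Definition supp S (u : 'X_{1..n}) : bool := [forall i, (u i != 0)%N ==> S i].
Definition tS S : n.-tuple {mpoly K[n]} := [tuple (if S i then 'X_i else 0) | i < n].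

Lemma phiX S u : 'X_[u] \mPo tS S = if supp S u then 'X_[u] else 0.
Proof.
rewrite comp_mpolyX; case: ifP => H.
  rewrite -[in RHS](comp_mpoly_id 'X_[u]) comp_mpolyX; apply: eq_bigr => i _.
  rewrite !tnth_mktuple; case Si: (S i) => //.
  have: u i == 0%N by move/forallP: H => /(_ i); rewrite Si implybF negbK.
  by move/eqP->; rewrite !expr0.
move/negbT: H => /forallPn [i]; rewrite negb_imply => /andP[nz nS].
by rewrite (bigD1 i) //= tnth_mktuple (negbTE nS) expr0n (negbTE nz) mul0r.
Qed.

Lemma phiXU S v : 'X_v \mPo tS S = if S v then 'X_v else 0.
Proof. by rewrite comp_mpolyXU -tnth_nth tnth_mktuple. Qed.

Lemma phi_id S p : (forall u, u \in msupp p -> supp S u) -> p \mPo tS S = p.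
Proof.
move=> H; rewrite comp_mpolyEX [RHS]mpolyE; apply: eq_big_seq => u Hu.
by rewrite phiX H.
Qed.

Lemma phi_0 S p : (forall u, u \in msupp p -> ~~ supp S u) -> p \mPo tS S = 0.
Proof.
move=> H; rewrite comp_mpolyEX big1_seq // => u /andP[_ Hu].
by rewrite phiX (negbTE (H u Hu)) scaler0.
Qed.

Lemma meval_supp S p :
  p.@[fun i => (S i)%:R] = \sum_(u <- msupp p) p@_u * (supp S u)%:R.
Proof.
rewrite mevalE; apply: eq_bigr => u _; congr (_ * _).
case H: (supp S u) => /=.
  rewrite big1 // => i _; case Si: (S i); first by rewrite expr1n.
  have: u i == 0%N by move/forallP: H => /(_ i); rewrite Si implybF negbK.
  by move/eqP->; rewrite expr0.
move/negbT: H => /forallPn [i]; rewrite negb_imply => /andP[nz nS].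
by rewrite (bigD1 i) //= (negbTE nS) expr0n (negbTE nz) mul0r.
Qed.

Lemma two_terms S p : (size (msupp p) <= 2)%N ->
  p.@[fun i => (S i)%:R] = 0 -> (exists2 w, w \in msupp p & supp S w) ->
  forall u, u \in msupp p -> supp S u.
Proof.
move=> H2 H0 [w Hw Sw] u Hu; apply/negPn/negP => nSu.
have uw : u != w by apply: contraNneq nSu => ->.
rewrite meval_supp (bigD1_seq w) ?msupp_uniq //= Sw mulr1 big1_seq in H0.
  by move: Hw; rewrite addr0 in H0; rewrite mcoeff_msupp H0 eqxx.
move=> z /andP[zw Hz]; case Sz: (supp S z); last by rewrite mulr0.
have zu : z != u by apply: contraNneq nSu => <-; rewrite Sz.
have : (size [:: z; u; w] <= size (msupp p))%N.
  apply: uniq_leq_size; first by rewrite /= !inE negb_or zu zw uw.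
  by move=> x; rewrite !inE => /or3P[] /eqP->.
by move=> /leq_trans /(_ H2).
Qed.

Lemma in_ideal_mem (gs : seq {mpoly K[n]}) b : b \in gs -> in_ideal gs b.
Proof.
move=> bin; exists (fun k => ((k : nat) == index b gs)%:R).
have j := index_mem b gs; rewrite bin in j.
rewrite (bigD1 (Ordinal j)) //= eqxx mul1r nth_index // big1 ?addr0 //.
by move=> k; rewrite -val_eqE /= => /negbTE ->; rewrite mul0r.
Qed.

End Gen.

Section Spec.
Variables (K : fieldType) (m : nat) (d : 'I_m -> nat).
Hypothesis Hd : forall i, (0 < d i)%N.

Definition idx (v : 'I_(m + m)) : 'I_m :=
  match split v with inl i => i | inr i => i end.
Lemma idxl i : idx (lshift m i) = i.
Proof. by rewrite /idx (unsplitK (inl i)). Qed.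
Lemma idxr i : idx (rshift m i) = i.
Proof. by rewrite /idx (unsplitK (inr i)). Qed.

Definition VS (T : pred 'I_m) : pred 'I_(m + m) := fun v => T (idx v).

Local Notation gs := (I2D K d).
Local Notation ps := (I2D_pairs m).

Lemma gs_mem g : g \in gs -> exists2 ij, ij \in ps & g = minorD K d ij.1 ij.2.
Proof. by case/mapP => ij H ->; exists ij. Qed.

Lemma ps_lt ij : ij \in ps -> (nat_of_ord ij.1 < nat_of_ord ij.2)%N.
Proof. by rewrite mem_filter => /andP[]. Qed.

Lemma memI b a : in_ideal gs b ->
  (forall i, a (lshift m i) = a (rshift m i)) -> b.@[a] = 0.
Proof.
case=> c -> Ha; rewrite rmorph_sum big1 // => i _; rewrite rmorphM /=.
have /gs_mem [ij _ ->] := mem_nth 0 (ltn_ord i).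
rewrite /minorD /xv /yv rmorphB !rmorphM !rmorphXn /= !mevalXU -!Ha.
by rewrite [X in _ - X]mulrC subrr mulr0.
Qed.

Lemma phi_minor (T : pred 'I_m) i j : T i -> T j ->
  minorD K d i j \mPo tS K (VS T) = minorD K d i j.
Proof.
move=> Ti Tj; rewrite /minorD /xv /yv rmorphB !rmorphM !rmorphXn /= !phiXU.
by rewrite /VS !idxl !idxr Ti Tj.
Qed.

Lemma phi_minor0 (T : pred 'I_m) i j : ~~ (T i && T j) ->
  minorD K d i j \mPo tS K (VS T) = 0.
Proof.
move=> H; rewrite /minorD /xv /yv rmorphB !rmorphM !rmorphXn /= !phiXU.
rewrite /VS !idxl !idxr.
by case: (T i) (T j) H => [] [] //= _; rewrite !expr0n ?gtn_eqF ?Hd //= ?mul0r ?mulr0 ?subrr.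
Qed.

Lemma killI (T : pred 'I_m) b : in_ideal gs b ->
  (forall ij, ij \in ps -> ~~ (T ij.1 && T ij.2)) -> b \mPo tS K (VS T) = 0.
Proof.
case=> c -> H; rewrite rmorph_sum big1 // => i _; rewrite rmorphM /=.
have /gs_mem [ij Hij ->] := mem_nth 0 (ltn_ord i).
by rewrite phi_minor0 ?H // mulr0.
Qed.

Lemma minor_neq0 i j : (val i < val j)%N -> minorD K d i j != 0.
Proof.
move=> ij; apply/eqP => H0.
pose a (v : 'I_(m + m)) : K := ((v == lshift m i) || (v == rshift m j))%:R.
have := congr1 (meval a) H0.
rewrite /minorD /xv /yv rmorphB !rmorphM !rmorphXn /= !mevalXU /a /= !eqxx /=.
have Ei := ltn_ord i; have Ej := ltn_ord j.
have -> : (lshift m j == lshift m i) = false.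
  by rewrite -val_eqE /= eq_sym ltn_eqF.
have -> : (lshift m j == rshift m j) = false.
  by rewrite -val_eqE /= ltn_eqF // (leq_trans Ej (leq_addr _ _)).
have -> : (rshift m i == lshift m i) = false.
  by rewrite -val_eqE /= eq_sym ltn_eqF // (leq_trans Ei (leq_addr _ _)).
have -> : (rshift m i == rshift m j) = false.
  by rewrite -val_eqE /= eqn_add2l ltn_eqF.
rewrite orbT /= !expr1n !expr0n !gtn_eqF ?Hd //= mulr0 subr0 mul1r rmorph0.
by move/eqP; rewrite oner_eq0.
Qed.

Lemma minor_binomial i j : Defs.binomial (minorD K d i j).
Proof.
rewrite /binomial /minorD /xv /yv !mpolyXn -!mpolyXD.
apply: leq_trans (_ : (size [:: _; _] <= 2)%N) => //.
apply: uniq_leq_size; first exact: msupp_uniq.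
move=> x /msuppB_le; rewrite mem_cat !msuppX !inE; exact.
Qed.


Definition PP (p : 'I_m * 'I_m) : pred 'I_m :=
  fun t => (nat_of_ord t == nat_of_ord p.1) || (nat_of_ord t == nat_of_ord p.2).

Lemma pair_lem p q ij : p \in ps -> q \in ps -> ij \in ps ->
  PP p ij.1 -> PP p ij.2 -> PP q ij.1 -> PP q ij.2 -> p = q.
Proof.
move: p q ij => [p1 p2] [q1 q2] [i j] /ps_lt /= hp /ps_lt /= hq /ps_lt /= hij.
rewrite /PP /= => /orP[]/eqP e1 /orP[]/eqP e2 /orP[]/eqP e3 /orP[]/eqP e4;
  (congr pair; apply: val_inj => /=; lia).
Qed.

Lemma all_supp (T : pred 'I_m) b : Defs.binomial b -> in_ideal gs b ->
  b \mPo tS K (VS T) != 0 -> forall u, u \in msupp b -> supp (VS T) u.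
Proof.
move=> Hb Hi Hn; apply: two_terms => //.
  by apply: memI => // i; rewrite /VS idxl idxr.
case: (boolP (has (supp (VS T)) (msupp b))) => [/hasP [w Hw Sw] | /hasPn H].
  by exists w.
by move: Hn; rewrite phi_0 ?eqxx.
Qed.


Lemma key B p : same_radical gs B -> p \in ps ->
  exists l : 'I_(size B), B`_l \mPo tS K (VS (PP p)) != 0.
Proof.
move=> Hrad pin; set f := minorD K d p.1 p.2.
have fin : f \in gs by apply: map_f.
have Hf : in_rad_ideal gs f by exists 1%N; apply: in_ideal_mem; rewrite expr1.
have [k [c Hc]] := (Hrad f).1 Hf.
case: (pickP (fun l : 'I_(size B) => B`_l \mPo tS K (VS (PP p)) != 0)) => [l Hl | H0].
  by exists l.
exfalso.
have : (f ^+ k) \mPo tS K (VS (PP p)) = 0.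
  rewrite Hc rmorph_sum big1 // => l _; rewrite rmorphM /=.
  by move: (H0 l) => /= /negbFE /eqP ->; rewrite mulr0.
rewrite rmorphXn /= /f phi_minor; last 2 first.
- by rewrite /PP eqxx.
- by rewrite /PP eqxx orbT.
move/eqP; rewrite expf_eq0 => /andP[_ /eqP].
by apply/eqP/minor_neq0/ps_lt.
Qed.

Lemma lower B : (forall b, b \in B -> Defs.binomial b /\ in_ideal gs b) ->
  same_radical gs B -> (size ps <= size B)%N.
Proof.
move=> HB Hrad.
case Eps: ps => [|p0 ps'] //.
have p0in : p0 \in ps by rewrite Eps mem_head.
have [l0 _] := key Hrad p0in.
pose g p := odflt l0 [pick l : 'I_(size B) | B`_l \mPo tS K (VS (PP p)) != 0].
have gP p : p \in ps -> B`_(g p) \mPo tS K (VS (PP p)) != 0.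
  move=> pin; rewrite /g; case: pickP => [l Hl | H0] //=.
  by have [l Hl] := key Hrad pin; move: (H0 l) Hl => /= ->.
have ups : uniq ps.
  apply: filter_uniq; apply: allpairs_uniq; try exact: enum_uniq.
  by move=> [? ?] [? ?] _ _.
have ginj : {in ps &, injective g}.
  move=> p q pin qin Eg; apply/eqP/negPn/negP => pq.
  set b := B`_(g p).
  have bin : b \in B by apply: mem_nth.
  have [Hb Hi] := HB b bin.
  have Sp := all_supp Hb Hi (gP p pin).
  have Sq : forall u, u \in msupp b -> supp (VS (PP q)) u.
    by apply: all_supp Hb Hi _; rewrite /b Eg; apply: gP.
  pose T : pred 'I_m := fun t => PP p t && PP q t.
  have bid : b \mPo tS K (VS T) = b.
    apply: phi_id => u Hu; apply/forallP => i; apply/implyP => ui.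
    move/forallP: (Sp u Hu) => /(_ i) /implyP /(_ ui) H1.
    move/forallP: (Sq u Hu) => /(_ i) /implyP /(_ ui) H2.
    by rewrite /VS /T; apply/andP.
  have b0 : b \mPo tS K (VS T) = 0.
    apply: killI => // ij ijin; apply/negP => /andP[/andP[h1 h2] /andP[h3 h4]].
    by move/eqP: pq; apply; apply: (pair_lem pin qin ijin).
  by move: (gP p pin); rewrite -/b -bid b0 rmorph0 eqxx.
rewrite -Eps -(size_map g) -[X in (_ <= X)%N]size_enum_ord.
apply: uniq_leq_size; first by rewrite map_inj_in_uniq.
by move=> x; rewrite mem_enum.
Qed.

End Spec.

Theorem theorem4p8 (K : fieldType) (m : nat) (d : 'I_m -> nat) :
  (2 <= m)%N -> (forall i, (0 < d i)%N) ->
  bar_eq (I2D K d) (m * (m - 1) %/ 2).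
Proof.
move=> _ Hd.
have Esz : size (I2D K d) = (m * (m - 1) %/ 2)%N.
  by rewrite size_map size_pairs bin2 divn2 subn1.
split.
  exists (I2D K d); split => //; split; last by [].
  move=> b bin; split; last exact: in_ideal_mem.
  by have [ij _ ->] := gs_mem bin; apply: minor_binomial.
move=> B HB Hrad; rewrite -Esz size_map; exact: (lower Hd HB Hrad).
Qed.
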